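(* Let $\bar s$ be a positive half-integer and let $\mathcal D,\mathcal D'$ be even nonnegative integers. Let $\mathcal H^{RSOS}(\mathcal D;\mathcal D';\bar s)$ be the set of integer sequences $(a_0,a_1,\dots,a_{\mathcal D};b_0,b_1,\dots,b_{\mathcal D'})$ such that (i) $0\le a_i\le 2\bar s$ for all $i$ and $0\le b_j\le 2\bar s$ for all $j$; (ii) $\frac{a_{i+1}-a_i+2\bar s-1}{2}\in\{0,1,\dots,2\bar s-1\}$ for $0\le i\le\mathcal D-1$, and $\frac{b_{j+1}-b_j+1}{2}\in\{0,1\}$ for $0\le j\le \mathcal D'-1$; (iii) $2\bar s-2\le a_i+a_{i+1}\le 2\bar s+2$ for $0\le i\le \mathcal D-1$; (iv) $a_0=0$, $a_{\mathcal D}=b_0$ and $b_{\mathcal D'}=0$. Then the number of elements of $\mathcal H^{RSOS}(\mathcal D;\mathcal D';\bar s)$ equals $$\frac{2^{\mathcal D+\mathcal D'}}{\bar s+1}\sum_{q=1}^{2\bar s+1}\sin^2\!\Big(\frac{q\pi}{2\bar s+2}\Big)\cos^{\mathcal D+\mathcal D'}\!\Big(\frac{q\pi}{2\bar s+2}\Big),$$ with the convention $0^0=1$.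
   Context: This set describes paths of a generalized RSOS model with restriction parameter $2\bar s+2$ (heights $0,\dots,2\bar s$), whose first $\mathcal D$ steps have jump $2\bar s-1$ and last $\mathcal D'$ steps have jump $1$. *)

(* Defs.v *)
From HB Require Import structures.
From mathcomp Require Import all_boot all_order all_algebra.
From mathcomp Require Import all_classical all_reals all_analysis.
Set Implicit Arguments. Unset Strict Implicit. Unset Printing Implicit Defensive.
Import Order.TTheory GRing.Theory Num.Theory.
Local Open Scope ring_scope.

(* Throughout, n = 2 * sbar (a positive integer since sbar is a positive
   half-integer).  Heights are elements of 'I_n.+1 = {0,...,n}. *)

Definition zv (m : nat) (x : 'I_m) : int := (nat_of_ord x)%:Z.

Definition a_step (n : nat) (x y : int) : bool :=
  [exists k : 'I_n, y - x + n%:Z - 1 == 2 * (nat_of_ord k)%:Z].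

Definition b_step (x y : int) : bool :=
  [exists k : 'I_2, y - x + 1 == 2 * (nat_of_ord k)%:Z].

Definition HRSOS (n D D' : nat) :
  {set {ffun 'I_D.+1 -> 'I_n.+1} * {ffun 'I_D'.+1 -> 'I_n.+1}} :=
  [set ab | let a : {ffun 'I_D.+1 -> 'I_n.+1} := ab.1 in
           let b : {ffun 'I_D'.+1 -> 'I_n.+1} := ab.2 in
    [&& [forall i : 'I_D,
           a_step n (zv (a (inord i))) (zv (a (inord i.+1)))],
        [forall j : 'I_D',
           b_step (zv (b (inord j))) (zv (b (inord j.+1)))],
        [forall i : 'I_D,
           (n%:Z - 2 <= zv (a (inord i)) + zv (a (inord i.+1)))
           && (zv (a (inord i)) + zv (a (inord i.+1)) <= n%:Z + 2)],
        zv (a ord0) == 0,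
        zv (a ord_max) == zv (b ord0) &
        zv (b ord_max) == 0]].

(* Main.v *)
Require Import Defs.
From HB Require Import structures.
From mathcomp Require Import all_boot all_order all_algebra.
From mathcomp Require Import all_classical all_reals all_analysis.
From mathcomp Require Import ring lra zify.
Import Order.TTheory GRing.Theory Num.Theory.
Local Open Scope ring_scope.

Section Trig.
Variable R : realType.

Lemma sin_addnpi (m : nat) (t : R) : sin (t + m%:R * pi) = (-1) ^+ m * sin t.
Proof.
elim: m => [|m IH]; first by rewrite mul0r addr0 expr0 mul1r.
by rewrite -addn1 natrD mulrDl mul1r addrA sinDpi IH exprD expr1 mulrN1 mulNr.
Qed.

Lemma sin_natpi (m : nat) : sin (m%:R * pi) = 0 :> R.
Proof. by rewrite -[_ * pi]add0r sin_addnpi sin0 mulr0. Qed.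

Lemma telesc_step (a t : R) :
  cos a * (sin t *+ 2) = sin (a + t *+ 2 - t) - sin (a - t).
Proof.
have -> : a + t *+ 2 - t = a + t by rewrite mulr2n; ring.
rewrite sinD sinB -mulr_natr; ring.
Qed.

Lemma cos_sum (N m : nat) : (0 < m <= N)%N ->
  \sum_(1 <= q < N) cos (q%:R * (m%:R * pi / N%:R)) = - (1 + (-1) ^+ m) / 2 :> R.
Proof.
move=> /andP [m0 mN].
have N0 : (0 < N)%N by apply: leq_trans mN.
set t : R := m%:R * pi / N%:R / 2.
have tgt0 : 0 < t.
  by rewrite /t !divr_gt0 ?mulr_gt0 ?pi_gt0 ?ltr0n.
have tle : t <= pi / 2.
  rewrite /t ler_pM2r // ler_pdivrMr ?ltr0n // [pi * _]mulrC ler_pM2r ?pi_gt0 //.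
  by rewrite ler_nat.
have st : 0 < sin t.
  apply: sin_gt0_pi; rewrite tgt0 /=; apply: (le_lt_trans tle).
  rewrite ltr_pdivrMr // ltr_pMr ?pi_gt0 //; lra.
pose u (k : nat) := sin (k%:R * (t *+ 2) - t).
have key : \sum_(1 <= q < N) (cos (q%:R * (m%:R * pi / N%:R)) * (sin t *+ 2))
           = u N - u 1%N.
  apply: telescope_sumr_eq => // k _.
  rewrite /u -[k.+1]addn1 natrD mulrDl mul1r.
  have -> : (m%:R * pi / N%:R) = t *+ 2.
    by rewrite /t -[_ *+ 2]mulr_natr divfK.
  exact: telesc_step.
have uN : u N = - (-1) ^+ m * sin t.
  rewrite /u.
  have -> : N%:R * (t *+ 2) = m%:R * pi.
    rewrite /t -[_ *+ 2]mulr_natr divfK // mulrC divfK //.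
    by rewrite pnatr_eq0 -lt0n.
  rewrite sinB sin_natpi mul0r add0r.
  have -> : cos (m%:R * pi) = (-1) ^+ m :> R.
    have := sin_addnpi m (pi / 2).
    by rewrite addrC sinDpihalf sin_pihalf mulr1.
  by rewrite mulNr.
have u1 : u 1%N = sin t by rewrite /u mul1r mulr2n addrK.
move: key; rewrite -big_distrl /= uN u1 => key.
apply: (@mulIf _ (sin t *+ 2)).
  by rewrite mulrn_eq0 /= (gt_eqF st).
rewrite key; rewrite -mulr_natr; by field.
Qed.
End Trig.


Section Spec.
Variable R : realType.

Lemma prod_sin (a b : R) : sin a * sin b = (cos (b - a) - cos (b + a)) / 2.
Proof. by rewrite cosB cosD; field. Qed.

Definition hh (N q k : nat) : R := sin (q%:R * (k%:R * pi / N%:R)).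

Lemma ortho (n x : nat) : (x <= n)%N ->
  \sum_(1 <= q < n.+2) hh n.+2 q 1 * hh n.+2 q x.+1
    = (x == 0%N)%:R * (n.+2)%:R / 2.
Proof.
move=> xn.
set N := n.+2.
have E : forall q, hh N q 1 * hh N q x.+1 =
   (cos (q%:R * (x%:R * pi / N%:R)) - cos (q%:R * (x.+2%:R * pi / N%:R))) / 2.
  move=> q; rewrite /hh prod_sin; congr ((cos _ - cos _) / 2).
    by rewrite -[x.+1]addn1 natrD; ring.
  by rewrite -[x.+2]addn2 -[x.+1]addn1 natrD natrD; ring.
under eq_bigr do rewrite E.
rewrite -big_distrl /= sumrB.
rewrite (@cos_sum R N x.+2); last by rewrite /N; lia.
case: x xn E => [|x] xn E.
  under eq_bigr do rewrite mul0r mul0r mulr0 cos0.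
  rewrite sumr_const_nat /= expr2 mulrN1 opprK.
  rewrite /N subn1 /= -[n.+2%:R]natr1 -[n.+1%:R]natr1; by field.
rewrite (@cos_sum R N x.+1); last by rewrite /N; lia.
rewrite -[x.+3]addn2 exprD expr2 mulN1r opprK mulr1 subrr mul0r /=; by rewrite !mul0r.
Qed.
End Spec.


Section Eig.
Variable R : realType.

Definition eb {n : nat} (i j : 'I_n.+1) : bool :=
  (j == i.+1 :> nat) || (i == j.+1 :> nat).
Definition MB (n : nat) : 'M[R]_n.+1 := \matrix_(i, j) (eb i j)%:R.
Definition ww (n q : nat) : 'cV[R]_n.+1 := \col_i hh R n.+2 q i.+1.
Definition lam (n q : nat) : R := cos (q%:R * (1%:R * pi / n.+2%:R)) *+ 2.
Definition e0 (n : nat) : 'cV[R]_n.+1 := \col_i (i == ord0)%:R.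

Lemma sum_delta N k (g : nat -> R) :
  \sum_(j < N) ((j : nat) == k)%:R * g j = (k < N)%:R * g k.
Proof.
case: (ltnP k N) => hk.
  rewrite (bigD1 (Ordinal hk)) //= eqxx mul1r big1 ?addr0 ?mul1r // => j hj.
  suff -> : ((j : nat) == k) = false by rewrite mul0r.
  apply/negbTE; apply: contra hj => /eqP e; apply/eqP/val_inj.
  by rewrite /= e.
rewrite mul0r big1 // => j _.
suff -> : ((j : nat) == k) = false by rewrite mul0r.
apply/negbTE; apply/eqP => e; move: (ltn_ord j); rewrite e; lia.
Qed.

Lemma orb_nat (a b : bool) : ~~ (a && b) -> (a || b)%:R = a%:R + b%:R :> R.
Proof. by case: a; case: b => //= _; rewrite ?addr0 ?add0r. Qed.

Lemma eb_split n (i k : 'I_n.+1) :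
  (eb i k)%:R = ((k : nat) == i.+1)%:R + ((i : nat) == k.+1)%:R :> R.
Proof. rewrite /eb orb_nat //; apply/negP => /andP [/eqP -> /eqP]; lia. Qed.

Lemma hh_step N q k :
  hh R N q k + hh R N q k.+2 = cos (q%:R * (1%:R * pi / N%:R)) *+ 2 * hh R N q k.+1.
Proof.
rewrite /hh.
have -> : q%:R * (k%:R * pi / N%:R) =
   q%:R * (k.+1%:R * pi / N%:R) - q%:R * (1%:R * pi / N%:R) :> R.
  by rewrite -[k.+1]addn1 natrD; ring.
have -> : q%:R * (k.+2%:R * pi / N%:R) =
   q%:R * (k.+1%:R * pi / N%:R) + q%:R * (1%:R * pi / N%:R) :> R.
  by rewrite -[k.+2]addn1 natrD; ring.
rewrite sinB sinD -mulr_natr; ring.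
Qed.

Lemma hh0 N q : hh R N q 0 = 0.
Proof. by rewrite /hh !mul0r mulr0 sin0. Qed.

Lemma hhN N q : (0 < N)%N -> hh R N q N = 0.
Proof.
move=> N0; rewrite /hh mulrAC divff ?mul1r ?sin_natpi //.
by rewrite pnatr_eq0 -lt0n.
Qed.

Lemma eigen n q : MB n *m ww n q = lam n q *: ww n q.
Proof.
apply/matrixP => i j; rewrite !mxE.
under eq_bigr do rewrite !mxE eb_split mulrDl.
rewrite big_split /=.
rewrite (@sum_delta _ _ (fun k => hh R n.+2 q k.+1)).
case: i => [[|i] hi] /=.
  rewrite big1 ?addr0; last by move=> k _; rewrite mul0r.
  rewrite /lam -hh_step hh0 add0r.
  by case: n hi => [|n] hi /=; [rewrite mul0r hhN | rewrite mul1r].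
have -> : \sum_(i0 < n.+1) (i.+1 == i0.+1)%:R * hh R n.+2 q i0.+1
   = \sum_(i0 < n.+1) ((i0 : nat) == i)%:R * hh R n.+2 q i0.+1.
  by apply: eq_bigr => k _; rewrite eqSS eq_sym.
rewrite (@sum_delta _ _ (fun k => hh R n.+2 q k.+1)).
have hi' : (i < n.+1)%N by lia.
rewrite hi' mul1r addrC /lam -hh_step.
case: (ltnP i.+2 n.+1) => h; first by rewrite mul1r.
have -> : i.+2 = n.+1 by lia.
by rewrite mul0r hhN ?addr0.
Qed.
End Eig.


Section Sp.
Variable R : realType.

Lemma pow_eigen n q L : MB R n ^+ L *m ww R n q = lam R n q ^+ L *: ww R n q.
Proof.
elim: L => [|L IH]; first by rewrite expr0 scale1r mul1mx.
by rewrite exprS -mulmxE -mulmxA IH -scalemxAr eigen scalerA exprSr.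
Qed.

Lemma col_e0 n (A : 'M[R]_n.+1) i : (A *m e0 R n) i 0 = A i ord0.
Proof.
rewrite !mxE (bigD1 ord0) //= big1 ?addr0; first by rewrite mxE eqxx mulr1.
by move=> k hk; rewrite mxE (negbTE hk) mulr0.
Qed.

Lemma e0_exp n :
  e0 R n = \sum_(1 <= q < n.+2) ((2 / n.+2%:R) * hh R n.+2 q 1) *: ww R n q.
Proof.
apply/matrixP => i j; rewrite summxE !mxE.
under eq_bigr do rewrite !mxE -mulrA.
rewrite -big_distrr /= ortho; last by rewrite -ltnS.
have -> : (i == ord0) = ((i : nat) == 0%N) by [].
by field.
Qed.

Lemma MB_pow00 n L : (MB R n ^+ L) ord0 ord0 =
  \sum_(1 <= q < n.+2) 2 / n.+2%:R * hh R n.+2 q 1 ^+ 2 * lam R n q ^+ L.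
Proof.
rewrite -col_e0 e0_exp mulmx_sumr summxE.
apply: eq_bigr => q _.
by rewrite -scalemxAr pow_eigen !mxE; ring.
Qed.
End Sp.

Set Implicit Arguments. Unset Strict Implicit. Unset Printing Implicit Defensive.

Section Paths.
Variable R : realType.

Definition pathb {T : finType} {L : nat} (e : rel T) (f : {ffun 'I_L.+1 -> T}) :=
  [forall i : 'I_L, e (f (inord i)) (f (inord i.+1))].
Definition Me {m : nat} (e : rel 'I_m.+1) : 'M[R]_m.+1 := \matrix_(i, j) (e i j)%:R.
Definition ext {T : finType} {L : nat} (g : {ffun 'I_L.+1 -> T}) (t : T) :
  {ffun 'I_L.+2 -> T} := [ffun i => if unlift ord_max i is Some j then g j else t].

Section Fin.
Variable T : finType.

Lemma ext_lift L (g : {ffun 'I_L.+1 -> T}) t j : ext g t (lift ord_max j) = g j.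
Proof. by rewrite ffunE liftK. Qed.

Lemma ext_max L (g : {ffun 'I_L.+1 -> T}) t : ext g t ord_max = t.
Proof. by rewrite ffunE unlift_none. Qed.

Lemma ext_inord L (g : {ffun 'I_L.+1 -> T}) t k : (k <= L)%N ->
  ext g t (inord k) = g (inord k).
Proof.
move=> hk; rewrite -(ext_lift g t); congr (ext g t _); apply: val_inj.
rewrite /= /bump inordK; last by lia.
rewrite inordK; last by lia.
by rewrite leqNgt ltnS hk.
Qed.

Lemma ext_inordmax L (g : {ffun 'I_L.+1 -> T}) t : ext g t (inord L.+1) = t.
Proof.
rewrite -[RHS](ext_max g t); congr (ext g t _); apply: val_inj.
by rewrite /= inordK.
Qed.

Lemma inord_max L : (inord L : 'I_L.+1) = ord_max.
Proof. by apply: val_inj; rewrite /= inordK. Qed.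

Lemma ext_ord0 L (g : {ffun 'I_L.+1 -> T}) t : ext g t ord0 = g ord0.
Proof.
have -> : (ord0 : 'I_L.+2) = lift ord_max ord0 by apply: val_inj.
by rewrite ext_lift.
Qed.

Lemma pathb_ext (e : rel T) L (g : {ffun 'I_L.+1 -> T}) t :
  pathb e (ext g t) = pathb e g && e (g ord_max) t.
Proof.
apply/forallP/andP.
  move=> H; split.
    apply/forallP => i.
    have := H (widen_ord (leqnSn _) i).
    by rewrite /= !ext_inord //; move: (ltn_ord i); lia.
  have := H ord_max.
  by rewrite /= ext_inord // ext_inordmax inord_max.
case=> /forallP H1 H2 i.
case: (ltnP i L) => hi.
  have := H1 (Ordinal hi).
  by rewrite /= !ext_inord //; move: (ltn_ord i); lia.
have iL : (i : nat) = L by move: (ltn_ord i); lia.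
by rewrite iL ext_inord // ext_inordmax inord_max.
Qed.

Lemma sum_ffunS L (F : {ffun 'I_L.+2 -> T} -> R) :
  \sum_f F f = \sum_(g : {ffun 'I_L.+1 -> T}) \sum_(t : T) F (ext g t).
Proof.
rewrite pair_bigA /=.
rewrite (reindex (fun p : {ffun 'I_L.+1 -> T} * T => ext p.1 p.2)) //=.
exists (fun f : {ffun 'I_L.+2 -> T} => ([ffun j => f (lift ord_max j)], f ord_max)).
  move=> [g t] _ /=; rewrite ext_max; congr (_, _).
  by apply/ffunP => j; rewrite ffunE ext_lift.
move=> f _ /=; apply/ffunP => i; rewrite ffunE.
by case: unliftP => [j ->|->]; rewrite ?ffunE.
Qed.

Lemma sum_ffun1 (F : {ffun 'I_1 -> T} -> R) :
  \sum_f F f = \sum_(t : T) F [ffun => t].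
Proof.
rewrite (reindex (fun t : T => [ffun => t])) //=.
exists (fun f : {ffun 'I_1 -> T} => f ord0).
  by move=> t _; rewrite ffunE.
by move=> f _; apply/ffunP => i; rewrite ffunE (ord1 i).
Qed.
End Fin.

Lemma count_paths m L (e : rel 'I_m.+1) (x y : 'I_m.+1) :
  \sum_(f : {ffun 'I_L.+1 -> 'I_m.+1})
     ([&& f ord0 == x, pathb e f & f ord_max == y] : nat)%:R
  = (Me e ^+ L) x y.
Proof.
elim: L y => [|L IH] y.
  rewrite sum_ffun1 expr0 mxE.
  under eq_bigr do rewrite !ffunE.
  have P0 : forall t, pathb e ([ffun => t] : {ffun 'I_1 -> 'I_m.+1}).
    by move=> t; apply/forallP => [[]].
  under eq_bigr do rewrite P0.
  rewrite (bigD1 x) //= big1 ?addr0; first by rewrite eqxx.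
  by move=> t /negbTE ->.
rewrite sum_ffunS exprSr -mulmxE mxE.
symmetry; under eq_bigr do rewrite -IH mulr_suml.
rewrite exchange_big /=; symmetry.
apply: eq_bigr => g _.
rewrite (bigD1 y) //= big1 ?addr0; last first.
  by move=> t /negbTE ht; rewrite ext_ord0 pathb_ext ext_max ht !andbF.
rewrite (bigD1 (g ord_max)) //= big1 ?addr0; last first.
  by move=> t ht; rewrite [g ord_max == t]eq_sym (negbTE ht) !andbF mul0r.
rewrite ext_ord0 pathb_ext ext_max !eqxx !mxE.
by rewrite !andbT -natrM mulnb andbA.
Qed.
End Paths.


Definition eaR (n : nat) : rel 'I_n.+1 := fun x y =>
  a_step n (zv x) (zv y) &&
  ((n%:Z - 2 <= zv x + zv y) && (zv x + zv y <= n%:Z + 2)).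
Definition ebR (n : nat) : rel 'I_n.+1 := fun x y => b_step (zv x) (zv y).

Lemma ebR_eb n (x y : 'I_n.+1) : ebR x y = eb x y.
Proof.
rewrite /ebR /b_step /eb /zv.
have := ltn_ord x; have := ltn_ord y => hy hx.
apply/existsP/orP.
  case=> [[[|[|k]] hk]] //= /eqP H; [right | left]; apply/eqP; lia.
case=> /eqP H.
  by exists (@Ordinal 2 1 isT); apply/eqP; rewrite /=; lia.
by exists (@Ordinal 2 0 isT); apply/eqP; rewrite /=; lia.
Qed.

Lemma eaR_eb n (x y : 'I_n.+1) : eaR x y = eb (rev_ord x) y.
Proof.
rewrite /eaR /a_step /eb /zv /=.
have := ltn_ord x; have := ltn_ord y => hy hx.
apply/idP/idP.
  case/andP => /existsP [k /eqP H] /andP [H1 H2].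
  have hk := ltn_ord k.
  have : (x + y = n.+1)%N \/ (x + y + 1 = n)%N by lia.
  by case=> E; apply/orP; [left | right]; apply/eqP; lia.
case/orP => /eqP H.
  have hk : (y.-1 < n)%N by lia.
  apply/andP; split; last by apply/andP; split; lia.
  by apply/existsP; exists (Ordinal hk); apply/eqP => /=; lia.
have hk : (y < n)%N by lia.
apply/andP; split; last by apply/andP; split; lia.
by apply/existsP; exists (Ordinal hk); apply/eqP => /=; lia.
Qed.


Lemma zv_eq m (x y : 'I_m) : (zv x == zv y) = (x == y).
Proof. by rewrite /zv eqz_nat. Qed.

Lemma zv_eq0 m (x : 'I_m.+1) : (zv x == 0) = (x == ord0).
Proof. by rewrite -(zv_eq x ord0). Qed.

Lemma pathb_ea n D (a : {ffun 'I_D.+1 -> 'I_n.+1}) :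
  pathb (@eaR n) a =
  [forall i : 'I_D, a_step n (zv (a (inord i))) (zv (a (inord i.+1)))] &&
  [forall i : 'I_D, (n%:Z - 2 <= zv (a (inord i)) + zv (a (inord i.+1)))
           && (zv (a (inord i)) + zv (a (inord i.+1)) <= n%:Z + 2)].
Proof.
apply/forallP/andP.
  by move=> H; split; apply/forallP => i; have /andP [] := H i.
by case=> /forallP H1 /forallP H2 i; rewrite /eaR H1 H2.
Qed.

Lemma memH n D D' a b : ((a, b) \in HRSOS n D D') =
  [&& pathb (@eaR n) a, pathb (@ebR n) b, a ord0 == ord0,
      a ord_max == b ord0 & b ord_max == ord0].
Proof.
rewrite inE /= pathb_ea zv_eq0 zv_eq zv_eq0.
set A1 := [forall _, a_step _ _ _].
set A2 := [forall _, _ && _].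
rewrite /pathb /ebR.
set B1 := [forall _, b_step _ _].
by case: A1; case: A2; case: B1.
Qed.

Section Main.
Variable R : realType.

Lemma card_split n D D' :
  (#|HRSOS n D D'|)%:R =
  \sum_(y : 'I_n.+1)
    (\sum_(a : {ffun 'I_D.+1 -> 'I_n.+1})
       ([&& a ord0 == ord0, pathb (@eaR n) a & a ord_max == y] : nat)%:R) *
    (\sum_(b : {ffun 'I_D'.+1 -> 'I_n.+1})
       ([&& b ord0 == y, pathb (@ebR n) b & b ord_max == ord0] : nat)%:R) :> R.
Proof.
have E1 : (#|HRSOS n D D'|)%:R = \sum_a \sum_b
   (if (a, b) \in HRSOS n D D' then 1 else 0 : R).
  by rewrite pair_bigA /= -sum1_card natr_sum big_mkcond; apply: eq_bigr => [[a b]].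
rewrite E1; symmetry.
under eq_bigr do rewrite mulr_suml.
rewrite exchange_big /=; symmetry; apply: eq_bigr => a _; symmetry.
under eq_bigr do rewrite mulr_sumr.
rewrite exchange_big /=; symmetry; apply: eq_bigr => b _.
rewrite (bigD1 (a ord_max)) //= big1 ?addr0; last first.
  by move=> y hy; rewrite [a ord_max == y]eq_sym (negbTE hy) !andbF mul0r.
rewrite memH eqxx [b ord0 == a ord_max]eq_sym.
case: (pathb _ a); case: (pathb _ b); case: (a ord0 == ord0);
  case: (a ord_max == b ord0); case: (b ord_max == ord0);
  by rewrite /= ?mul1r ?mul0r.
Qed.

Lemma Mea n : Me R (@eaR n) = \matrix_(i, j) (eb (rev_ord i) j)%:R.
Proof. by apply/matrixP => i j; rewrite !mxE eaR_eb. Qed.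

Lemma Meb n : Me R (@ebR n) = MB R n.
Proof. by apply/matrixP => i j; rewrite !mxE ebR_eb. Qed.

Lemma eb_sym n (x y : 'I_n.+1) : eb x y = eb y x.
Proof. by rewrite /eb orbC. Qed.

Lemma eb_rev n (x y : 'I_n.+1) : eb (rev_ord x) (rev_ord y) = eb x y.
Proof.
rewrite /eb /=; have := ltn_ord x; have := ltn_ord y => hy hx.
apply/idP/idP => /orP [] /eqP H; apply/orP; [right|left|right|left]; apply/eqP; lia.
Qed.

Lemma Mea2 n : (Me R (@eaR n)) ^+ 2 = (MB R n) ^+ 2.
Proof.
rewrite Mea !expr2 -!mulmxE; apply/matrixP => i k; rewrite !mxE.
rewrite (reindex_inj (@rev_ord_inj n.+1)) /=.
by apply: eq_bigr => j _; rewrite !mxE rev_ordK eb_rev.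
Qed.
End Main.

Unset Implicit Arguments. Set Strict Implicit.

Theorem proposition6p1 (R : realType) (n D D' : nat) (hn : (0 < n)%N)
    (hD : ~~ odd D) (hD' : ~~ odd D') :
  let sbar : R := n%:R / 2 in
  (#|HRSOS n D D'|)%:R =
    (2 ^+ (D + D')) / (sbar + 1) *
    \sum_(1 <= q < n.+2)
      (sin (q%:R * pi / (2 * sbar + 2))) ^+ 2 *
      (cos (q%:R * pi / (2 * sbar + 2))) ^+ (D + D').
Proof.
move=> sbar.
rewrite card_split.
under eq_bigr do rewrite (count_paths R) (count_paths R).
have -> : \sum_(y < n.+1) (Me R (eaR (n:=n)) ^+ D) ord0 y * (Me R (ebR (n:=n)) ^+ D') y ord0
  = (Me R (eaR (n:=n)) ^+ D *m Me R (ebR (n:=n)) ^+ D') ord0 ord0 by rewrite mxE.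
have EA : Me R (eaR (n:=n)) ^+ D = MB R n ^+ D.
  have hDe : D = (D./2 * 2)%N.
    by rewrite muln2 -{1}(odd_double_half D) (negbTE hD) add0n.
  by rewrite hDe mulnC !exprM Mea2.
rewrite EA Meb mulmxE -exprD MB_pow00.
rewrite /sbar.
have e2 : 2 * (n%:R / 2) + 2 = n.+2%:R :> R.
  by rewrite -[n.+2]addn2 natrD; field.
have e3 : n%:R / 2 + 1 = n.+2%:R / 2 :> R.
  by rewrite -[n.+2]addn2 natrD; field.
have ea : forall q : nat, q%:R * (1%:R * pi / n.+2%:R) = q%:R * pi / n.+2%:R :> R.
  by move=> q; rewrite mulr1n mul1r mulrA.
rewrite e2 e3 mulr_sumr; apply: eq_bigr => q _.
rewrite /hh /lam ea -[cos _ *+ 2]mulr_natl exprMn.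
by field; rewrite -natrD pnatr_eq0.
Qed.
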